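(* For every $k\in[K]$, the function $f_k:\mathbb{R}^K_{\ge0}\setminus\{\mathbf{0}\}\to\mathbb{R}$ is a $0$-homogeneous rational function of ${\bm{r}}$.
   Context: Setting: distributions $\mathcal{D}_1,\dots,\mathcal{D}_K$ on $\mathcal{Z}$, a loss $\ell(h,{\bm{z}})$ (all expectations finite), $N\ge1$, and a learning algorithm $\mathcal{A}:\mathcal{Z}^N\to\mathcal{H}$. For ${\bm{r}}\in\Delta_K=\{{\bm{r}}\ge0:\sum_kr_k=1\}$, $\bar e_k({\bm{r}})=\mathbb{E}_{S\sim(\sum_jr_j\mathcal{D}_j)^N}\mathbb{E}_{{\bm{z}}\sim\mathcal{D}_k}[\ell(\mathcal{A}(S),{\bm{z}})]$, and $f_k({\bm{r}})=\bar e_k({\bm{r}}/|{\bm{r}}|)$ for ${\bm{r}}\in\mathbb{R}^K_{\ge0}\setminus\{\mathbf{0}\}$, $|{\bm{r}}|=\sum_jr_j$. *)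

(* Defs.v *)
From HB Require Import structures.
From mathcomp Require Import all_boot all_order all_algebra.
From mathcomp Require Import all_classical all_reals all_analysis.
From mathcomp Require mpoly.

Set Implicit Arguments.
Unset Strict Implicit.
Unset Printing Implicit Defensive.

Import Order.TTheory GRing.Theory Num.Theory.
Local Open Scope classical_set_scope.
Local Open Scope ring_scope.

Section Defs.
Context {R : realType} {d : measure_display} {Z : measurableType d}.

Lemma max0_ge0 (x : R) : 0 <= Num.max 0 x.
Proof. by rewrite le_max lexx. Qed.

Definition nnpart (x : R) : {nonneg R} :=
  @NngNum R (Num.max 0 x) (max0_ge0 x).

(* The mixture measure  \sum_j w_j D_j  (weights are clipped at 0; on the
   simplex this is exactly the mixture). *)
Definition mixture (K : nat) (D : 'I_K -> {measure set Z -> \bar R})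
  (w : 'I_K -> R) : {measure set Z -> \bar R} :=
  msum (fun j : nat => match @insub nat (fun j => j < K)%N _ j with
                       | Some i => mscale (nnpart (w i)) (D i)
                       | None => mzero
                       end) K.

(* Expectation of g : Z^N -> \bar R under the N-fold product P^N,
   written as the iterated integral over the N coordinates. *)
Fixpoint prodE (P : {measure set Z -> \bar R}) (n : nat) :
  (n.-tuple Z -> \bar R) -> \bar R :=
  match n return (n.-tuple Z -> \bar R) -> \bar R with
  | 0%N => fun g => g [tuple]
  | n'.+1 => fun g => (\int[P]_z prodE P (fun t => g (cons_tuple z t)))%E
  end.

Definition ebar (K N : nat) (H : Type) (D : 'I_K -> {measure set Z -> \bar R})
  (ell : H -> Z -> R) (A : N.-tuple Z -> H) (k : 'I_K) (w : 'I_K -> R) : R :=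
  fine (prodE (mixture D w) (fun S => \int[D k]_z (ell (A S) z)%:E)%E).

Definition rsum (K : nat) (r : 'I_K -> R) : R := \sum_(j < K) r j.

Definition fk (K N : nat) (H : Type) (D : 'I_K -> {measure set Z -> \bar R})
  (ell : H -> Z -> R) (A : N.-tuple Z -> H) (k : 'I_K) (r : 'I_K -> R) : R :=
  ebar D ell A k (fun j => r j / rsum r).

End Defs.

Definition simplex {R : realType} (K : nat) : set ('I_K -> R) :=
  [set w | (forall j, 0 <= w j) /\ \sum_(j < K) w j = 1].

Definition nonneg_nonzero {R : realType} (K : nat) : set ('I_K -> R) :=
  [set r | (forall j, 0 <= r j) /\ exists j, r j != 0].

Definition homogeneous0 {R : realType} (K : nat) (Dom : set ('I_K -> R))
  (f : ('I_K -> R) -> R) : Prop :=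
  forall r c, Dom r -> 0 < c -> f (fun j => c * r j) = f r.

Definition rational_on {R : realType} (K : nat) (Dom : set ('I_K -> R))
  (f : ('I_K -> R) -> R) : Prop :=
  exists P Q : mpoly.mpoly K R,
    (forall r, Dom r -> mpoly.meval r Q != 0) /\
    (forall r, Dom r -> f r = mpoly.meval r P / mpoly.meval r Q).

(* Main.v *)
Require Import Defs.
From HB Require Import structures.
From mathcomp Require Import all_boot all_order all_algebra.
From mathcomp Require Import all_classical all_reals all_analysis measurable_realfun.
From mathcomp Require mpoly.
From mathcomp Require Import ring.
Import Order.TTheory GRing.Theory Num.Theory.
Local Open Scope classical_set_scope.
Local Open Scope ring_scope.

Module MyH.
Import -(notations) mpoly.

Section Generic.
Context {R : realType} {d : measure_display} {Z : measurableType d}.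
Local Open Scope ereal_scope.

Fixpoint prodM (n : nat) (m : nat -> {measure set Z -> \bar R}) :
  (n.-tuple Z -> \bar R) -> \bar R :=
  match n return (n.-tuple Z -> \bar R) -> \bar R with
  | 0%N => fun g => g [tuple]
  | n'.+1 => fun g => \int[m 0%N]_z prodM n' (fun i => m i.+1) (fun t => g (cons_tuple z t))
  end.

Lemma prodE_M (mu : {measure set Z -> \bar R}) n g :
  @prodE R d Z mu n g = prodM n (fun _ => mu) g.
Proof.
elim: n g => [//|n IH] g /=.
by apply: eq_integral => z _; rewrite IH.
Qed.

Definition pgood (mu : {measure set Z -> \bar R}) :=
  forall d1 (T1 : measurableType d1) (F : T1 * Z -> \bar R),
    measurable_fun setT F -> (forall p, 0 <= F p) ->
    measurable_fun setT (fun x => \int[mu]_y F (x, y)).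

Lemma pgoodS mu : pgood mu ->
  forall d1 (T1 : measurableType d1) (F : T1 * Z -> \bar R),
    measurable_fun setT F ->
    measurable_fun setT (fun x => \int[mu]_y F (x, y)).
Proof.
move=> hmu d1 T1 F mF.
have -> : (fun x => \int[mu]_y F (x, y)) = (fun x => \int[mu]_y F^\+ (x, y) - \int[mu]_y F^\- (x, y)).
  apply/funext => x; rewrite integralE; congr (_ - _); apply: eq_integral => y _; by rewrite !(funeposE, funenegE).
apply: emeasurable_funB.
- apply: (hmu _ _ F^\+); first exact: measurable_funepos.
  by move=> p; exact: funepos_ge0.
- apply: (hmu _ _ F^\-); first exact: measurable_funeneg.
  by move=> p; exact: funeneg_ge0.
Qed.

Lemma pgood_sf (mu : {sigma_finite_measure set Z -> \bar R}) : pgood mu.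
Proof.
move=> d1 T1 F mF F0.
exact: (@measurable_fun_fubini_tonelli_F _ _ _ _ _ mu F mF F0).
Qed.

Lemma prodM_meas n : forall (m : nat -> {measure set Z -> \bar R}),
  (forall i, pgood (m i)) ->
  forall d1 (T1 : measurableType d1) (G : T1 * n.-tuple Z -> \bar R),
    measurable_fun setT G ->
    measurable_fun setT (fun x => prodM n m (fun t => G (x, t))).
Proof.
elim: n => [|n IH] m hm d1 T1 G mG /=.
  exact: measurable_fun_pair1.
apply: (@pgoodS (m 0%N) (hm 0%N) _ _ (fun p : T1 * Z => prodM n (fun i => m i.+1) (fun t => G (p.1, cons_tuple p.2 t)))).
apply: (IH (fun i => m i.+1) (fun i => hm i.+1) _ (T1 * Z)%type
  (fun q => G (q.1.1, cons_tuple q.1.2 q.2))).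
apply: (measurableT_comp mG).
apply/measurable_fun_pairP; split.
  exact: (measurableT_comp measurable_fst measurable_fst).
exact: (measurable_cons (measurableT_comp measurable_snd measurable_fst) measurable_snd).
Qed.


Lemma prodM_meas1 n (m : nat -> {measure set Z -> \bar R}) :
  (forall i, pgood (m i)) ->
  forall g : n.+1.-tuple Z -> \bar R, measurable_fun setT g ->
  measurable_fun setT (fun z => prodM n m (fun t => g (cons_tuple z t))).
Proof.
move=> hm g mg.
apply: (@prodM_meas n m hm _ _ (fun p : Z * n.-tuple Z => g (cons_tuple p.1 p.2))).
apply: (measurableT_comp mg).
exact: (measurable_cons measurable_fst measurable_snd).
Qed.

Lemma prodM_ge0 n : forall (m : nat -> {measure set Z -> \bar R}) g,
  (forall t, 0 <= g t) -> 0 <= prodM n m g.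
Proof.
elim: n => [|n IH] m g g0 /=; first exact: g0.
by apply: integral_ge0 => z _; apply: IH => t.
Qed.

Lemma prodM_mono n : forall (m : nat -> {measure set Z -> \bar R}),
  (forall i, pgood (m i)) -> forall g1 g2,
  measurable_fun setT g1 -> measurable_fun setT g2 ->
  (forall t, 0 <= g1 t) -> (forall t, g1 t <= g2 t) ->
  prodM n m g1 <= prodM n m g2.
Proof.
elim: n => [|n IH] m hm g1 g2 mg1 mg2 g10 g12 /=; first exact: g12.
apply: ge0_le_integral => //.
- by move=> z _; apply: prodM_ge0.
- exact: prodM_meas1.
- exact: prodM_meas1.
move=> z _; apply: (IH (fun i => m i.+1) (fun i => hm i.+1)) => //.
- apply: (measurableT_comp mg1); exact: measurable_cons.
- apply: (measurableT_comp mg2); exact: measurable_cons.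
Qed.

Lemma prodM_add n : forall (m : nat -> {measure set Z -> \bar R}),
  (forall i, pgood (m i)) -> forall g1 g2,
  measurable_fun setT g1 -> measurable_fun setT g2 ->
  (forall t, 0 <= g1 t) -> (forall t, 0 <= g2 t) ->
  prodM n m (fun t => g1 t + g2 t) = prodM n m g1 + prodM n m g2.
Proof.
elim: n => [|n IH] m hm g1 g2 mg1 mg2 g10 g20 //=.
rewrite -ge0_integralD //; last 4 first.
- by move=> z _; apply: prodM_ge0.
- exact: prodM_meas1.
- by move=> z _; apply: prodM_ge0.
- exact: prodM_meas1.
apply: eq_integral => z _; apply: (IH (fun i => m i.+1) (fun i => hm i.+1)) => //.
- apply: (measurableT_comp mg1); exact: measurable_cons.
- apply: (measurableT_comp mg2); exact: measurable_cons.
Qed.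


Lemma prodM_split n : forall (m : nat -> {measure set Z -> \bar R}),
  (forall i, pgood (m i)) -> forall g,
  measurable_fun setT g -> prodM n m (fun t => `|g t|) < +oo ->
  prodM n m g = prodM n m g^\+ - prodM n m g^\-.
Proof.
elim: n => [|n IH] m hm g mg /=.
  by move=> _; rewrite {1}(funeposneg g).
move=> habs.
set m' := fun i => m i.+1.
have hm' : forall i, pgood (m' i) by move=> i; exact: hm.
set A := fun z => prodM n m' (fun t => g^\+ (cons_tuple z t)).
set B := fun z => prodM n m' (fun t => g^\- (cons_tuple z t)).
set h := fun z => prodM n m' (fun t => g (cons_tuple z t)).
have mA : measurable_fun setT A.
  by apply: prodM_meas1 => //; exact: measurable_funepos.
have mB : measurable_fun setT B.
  by apply: prodM_meas1 => //; exact: measurable_funeneg.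
have mh : measurable_fun setT h by exact: prodM_meas1.
have A0 : forall z, 0 <= A z.
  by move=> z; apply: prodM_ge0 => t; exact: funepos_ge0.
have B0 : forall z, 0 <= B z.
  by move=> z; apply: prodM_ge0 => t; exact: funeneg_ge0.
have hAB : forall z, prodM n m' (fun t => `|g (cons_tuple z t)|) = A z + B z.
  move=> z; rewrite /A /B -prodM_add //.
  - congr (prodM _ _ _); apply/funext => t.
    by rewrite -[in LHS]/((abse \o g) (cons_tuple z t)) fune_abse.
  - apply: measurableT_comp; first exact: measurable_funepos.
    exact: measurable_cons.
  - apply: measurableT_comp; first exact: measurable_funeneg.
    exact: measurable_cons.
have iAB : \int[m 0%N]_z (A z + B z) < +oo.
  by move: habs; under eq_integral => z _ do rewrite hAB.
have iAB' := iAB.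
rewrite ge0_integralD // in iAB'.
have iA : \int[m 0%N]_z A z < +oo.
  apply: le_lt_trans iAB'; apply: leeDl; apply: integral_ge0 => z _; exact: B0.
have iB : \int[m 0%N]_z B z < +oo.
  apply: le_lt_trans iAB'; apply: leeDr; apply: integral_ge0 => z _; exact: A0.
have intA : (m 0%N).-integrable setT A.
  apply/integrableP; split => //.
  by under eq_integral => z _ do rewrite gee0_abs//.
have intB : (m 0%N).-integrable setT B.
  apply/integrableP; split => //.
  by under eq_integral => z _ do rewrite gee0_abs//.
have intAB : (m 0%N).-integrable setT (A \+ B) by exact: integrableD.
have hae := integrable_ae measurableT intAB.
have hae2 : ae_eq (m 0%N) setT h (A \- B).
  apply: filterS hae => z /(_ I) hz _.
  rewrite /h (IH m' hm' (fun t => g (cons_tuple z t))).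
  - rewrite /A /B /=; congr (_ - _); congr (prodM _ _ _); apply/funext => t.
      by rewrite !funeposE.
    by rewrite !funenegE.
  - apply: (measurableT_comp mg).
    by apply: measurable_cons; [exact: measurable_cst | exact: measurable_id].
  - rewrite hAB -ge0_fin_numE //; exact: adde_ge0.
rewrite (ae_eq_integral (A \- B)) //; last exact: emeasurable_funB.
by rewrite integralB.
Qed.

End Generic.

Section Spec.
Context {R : realType} {d : measure_display} {Z : measurableType d}.
Context (K : nat) (Dm : 'I_K -> {measure set Z -> \bar R}).
Hypothesis hD : forall j, pgood (Dm j).
Local Open Scope ereal_scope.

Lemma mix_int w (f : Z -> \bar R) : measurable_fun setT f -> (forall z, 0 <= f z) ->
  \int[mixture Dm w]_z f z = \sum_(j < K) (Num.max 0 (w j))%:E * \int[Dm j]_z f z.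
Proof.
move=> mf f0; rewrite /mixture ge0_integral_measure_sum //.
apply: eq_bigr => j _; rewrite valK.
by rewrite ge0_integral_mscale.
Qed.

Lemma mix_pgood w : pgood (mixture Dm w).
Proof.
move=> d1 T1 F mF F0.
have -> : (fun x => \int[mixture Dm w]_y F (x, y)) =
   (fun x => \sum_(j < K) (Num.max 0 (w j))%:E * \int[Dm j]_y F (x, y)).
  apply/funext => x; apply: mix_int => //; exact: measurable_fun_pair2.
apply: emeasurable_sum => j.
apply: measurable_funeM.
exact: hD.
Qed.


Lemma pgood_mzero : pgood (@mzero d Z R).
Proof.
move=> d1 T1 F mF F0.
have -> : (fun x => \int[@mzero d Z R]_y F (x, y)) = (fun _ => 0).
  by apply/funext => x; rewrite integral_measure_zero.
exact: measurable_cst.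
Qed.

Fixpoint allseqs (n : nat) : seq (seq 'I_K) :=
  if n is n'.+1 then [seq j :: js | j <- index_enum 'I_K, js <- allseqs n']
  else [:: [::]].

Definition mseq (js : seq 'I_K) (i : nat) : {measure set Z -> \bar R} :=
  nth (@mzero d Z R : {measure set Z -> \bar R}) (map Dm js) i.

Lemma mseq_good js i : pgood (mseq js i).
Proof.
rewrite /mseq; elim: js i => [|j js IH] [|i] /=.
- exact: pgood_mzero.
- exact: pgood_mzero.
- exact: hD.
- exact: IH.
Qed.

Definition prodD {n} (js : seq 'I_K) (g : n.-tuple Z -> \bar R) :=
  prodM n (mseq js) g.

Lemma prodD_cons n j js (g : n.+1.-tuple Z -> \bar R) :
  prodD (j :: js) g = \int[Dm j]_z prodD js (fun t => g (cons_tuple z t)).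
Proof. by []. Qed.

Lemma size_allseqs n js : js \in allseqs n -> size js = n.
Proof.
elim: n js => [|n IH] js /=.
  by rewrite inE => /eqP ->.
by move=> /allpairsP [[j js'] /= [_ hjs ->]] /=; rewrite (IH _ hjs).
Qed.

Lemma expand n : forall w : 'I_K -> R, (forall j, (0 <= w j)%R) ->
  forall g : n.-tuple Z -> \bar R, measurable_fun setT g -> (forall t, 0 <= g t) ->
  prodM n (fun _ => mixture Dm w) g =
  \sum_(js <- allseqs n) (\prod_(j <- js) w j)%:E * prodD js g.
Proof.
elim: n => [|n IH] w w0 g mg g0.
  by rewrite /= big_seq1 big_nil mul1e.
have hmix : forall i : nat, pgood ((fun _ => mixture Dm w) i) by move=> i; exact: mix_pgood.
rewrite /= mix_int; last 2 first.
- exact: (@prodM_meas1 _ _ _ n _ hmix g mg).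
- by move=> z; apply: prodM_ge0.
rewrite big_allpairs_dep /=.
apply: eq_bigr => j _.
rewrite (_ : Num.max 0%R (w j) = w j); last by apply/max_idPr; exact: w0.
have mgz : forall z, measurable_fun setT (fun t : n.-tuple Z => g (cons_tuple z t)).
  move=> z; apply: (measurableT_comp mg).
  by apply: measurable_cons; [exact: measurable_cst | exact: measurable_id].
under eq_integral => z _ do rewrite (IH w w0 _ (mgz z) (fun t => g0 _)).
rewrite ge0_integral_sum //; last 2 first.
- move=> js; apply: measurable_funeM.
  apply: (@prodM_meas1 _ _ _ n (mseq js) (mseq_good js) g mg).
- move=> js z _; apply: mule_ge0; first by rewrite lee_fin; apply: prodr_ge0 => i _; exact: w0.
  by apply: prodM_ge0.
rewrite ge0_sume_distrr; last first.
  move=> js _; apply: integral_ge0 => z _; apply: mule_ge0.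
    by rewrite lee_fin; apply: prodr_ge0 => i _; exact: w0.
  by apply: prodM_ge0.
apply: eq_bigr => js _.
rewrite ge0_integralZl //.
- by rewrite big_cons EFinM muleA.
- exact: (@prodM_meas1 _ _ _ n (mseq js) (mseq_good js) g mg).
- by move=> z _; apply: prodM_ge0.
- by rewrite lee_fin; apply: prodr_ge0 => i _; exact: w0.
Qed.


Definition Xv (i : 'I_K) : mpoly.mpoly K R := mpoly.mpolyX R (mpoly.mnm1 i).

Lemma prod_const_seq (js : seq 'I_K) (x : R) :
  (\prod_(i <- js) x = x ^+ size js)%R.
Proof. by elim: js => [|a js IH]; rewrite ?big_nil ?big_cons ?IH ?exprS. Qed.

Lemma fin_mulE (x : R) (y : \bar R) : (0 < x)%R -> 0 <= y ->
  x%:E * y \is a fin_num -> y \is a fin_num.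
Proof.
move=> x0; case: y => // _.
by rewrite mulry gtr0_sg // mul1e.
Qed.

Lemma sum_pos (r : 'I_K -> R) : nonneg_nonzero r -> (0 < rsum r)%R.
Proof.
move=> [r0 [j rj]].
rewrite /rsum (bigD1 j) //=.
have h1 : (0 < r j)%R by rewrite lt0r rj r0.
apply: (lt_le_trans h1); rewrite lerDl.
by apply: sumr_ge0 => i _; exact: r0.
Qed.

Lemma rat_main N (g G : N.-tuple Z -> \bar R) :
  measurable_fun setT g -> measurable_fun setT G ->
  (forall t, 0 <= G t) -> (forall t, `|g t| <= G t) ->
  (forall w, simplex w -> prodM N (fun _ => mixture Dm w) G < +oo) ->
  rational_on (@nonneg_nonzero R K)
    (fun r => fine (prodM N (fun _ => mixture Dm (fun j => (r j / rsum r)%R)) g)).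
Proof.
move=> mg mG G0 gG hfin.
have [K0|Kpos] := posnP K.
  exists 0%R, 0%R; split => r [_ [j _]]; by move: (ltn_ord j); rewrite {2}K0.
have mgp : measurable_fun setT g^\+ by exact: measurable_funepos.
have mgn : measurable_fun setT g^\- by exact: measurable_funeneg.
have gpG : forall t, g^\+ t <= G t.
  move=> t; apply: le_trans (gG t).
  rewrite -[`|g t|]/((abse \o g) t) fune_abse /=.
  by apply: leeDl; exact: funeneg_ge0.
have gnG : forall t, g^\- t <= G t.
  move=> t; apply: le_trans (gG t).
  rewrite -[`|g t|]/((abse \o g) t) fune_abse /=.
  by apply: leeDr; exact: funepos_ge0.
pose u : 'I_K -> R := fun _ => ((K%:R : R)^-1)%R.
have u0 : forall j, (0 <= u j)%R by move=> j; rewrite /u invr_ge0 ler0n.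
have su : simplex u.
  split => //; rewrite /u sumr_const card_ord -[(_ *+ K)%R]mulr_natr mulVf //.
  by rewrite pnatr_eq0 -lt0n.
have hmix : forall w : 'I_K -> R, forall i : nat, pgood ((fun _ => mixture Dm w) i).
  by move=> w i; exact: mix_pgood.
have finH : forall h, measurable_fun setT h -> (forall t, 0 <= h t) ->
    (forall t, h t <= G t) ->
    forall js, js \in allseqs N -> prodD js h \is a fin_num.
  move=> h mh h0 hG.
  have hle : prodM N (fun _ => mixture Dm u) h <= prodM N (fun _ => mixture Dm u) G.
    exact: (prodM_mono N _ (hmix u) _ _ mh mG h0 hG).
  rewrite expand // in hle.
  have hsum : \sum_(js <- allseqs N) (\prod_(j <- js) u j)%:E * prodD js h \is a fin_num.
    rewrite ge0_fin_numE; last first.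
      apply: sume_ge0 => js _; apply: mule_ge0.
        by rewrite lee_fin; apply: prodr_ge0 => i _; exact: u0.
      exact: prodM_ge0.
    exact: (le_lt_trans hle (hfin u su)).
  move=> js hjs; move/sum_fin_numP: hsum => /(_ js hjs isT) hfin'.
  move: hfin'; apply: fin_mulE.
    by apply: prodr_gt0 => i _; rewrite /u invr_gt0 ltr0n.
  exact: prodM_ge0.
have finP := finH _ mgp (fun t => funepos_ge0 g t) gpG.
have finN := finH _ mgn (fun t => funeneg_ge0 g t) gnG.
pose cf js := (fine (prodD js (g^\+)%E) - fine (prodD js (g^\-)%E))%R.
exists (\sum_(js <- allseqs N) cf js *: \prod_(i <- js) Xv i)%R.
exists ((\sum_(j < K) Xv j) ^+ N)%R.
have mQ : forall r, mpoly.meval r ((\sum_(j < K) Xv j) ^+ N)%R = (rsum r ^+ N)%R.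
  move=> r; rewrite rmorphXn rmorph_sum /rsum /Xv.
  by congr (_ ^+ _)%R; apply: eq_bigr => j _; exact: mpoly.mevalXU.
split.
  by move=> r hr; rewrite mQ expf_neq0 // gt_eqF //; exact: sum_pos.
move=> r hr.
have spos := sum_pos _ hr.
set s := rsum r.
set w := fun j => (r j / s)%R.
have w0 : forall j, (0 <= w j)%R.
  by move=> j; rewrite /w divr_ge0 //; [exact: hr.1 | exact: ltW].
have sw : simplex w.
  by split => //; rewrite /w -mulr_suml mulfV // gt_eqF.
have habs : prodM N (fun _ => mixture Dm w) (fun t => `|g t|) < +oo.
  apply: le_lt_trans (hfin w sw).
  apply: (prodM_mono N _ (hmix w)) => //.
  by apply: measurableT_comp => //; exact: abse_measurable.
rewrite (prodM_split N _ (hmix w) g mg habs) !expand //.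
have eP : \sum_(js <- allseqs N) (\prod_(j <- js) w j)%:E * prodD js g^\+ =
    (\sum_(js <- allseqs N) (\prod_(j <- js) w j) * fine (prodD js (g^\+)%E))%:E%R.
  rewrite -sumEFin big_seq [RHS]big_seq; apply: eq_bigr => js hjs.
  by rewrite EFinM fineK // finP.
have eN : \sum_(js <- allseqs N) (\prod_(j <- js) w j)%:E * prodD js g^\- =
    (\sum_(js <- allseqs N) (\prod_(j <- js) w j) * fine (prodD js (g^\-)%E))%:E%R.
  rewrite -sumEFin big_seq [RHS]big_seq; apply: eq_bigr => js hjs.
  by rewrite EFinM fineK // finN.
rewrite eP eN -EFinB /= mQ.
rewrite (big_morph (meval r) (mpoly.mevalD r) (mpoly.meval0 r)).
rewrite -sumrB mulr_suml big_seq [RHS]big_seq.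
apply: eq_bigr => js hjs.
rewrite mpoly.mevalZ (big_morph (meval r) (mpoly.mevalM r) (mpoly.meval1 r)).
rewrite (eq_bigr (fun i => r i) (fun i _ => mpoly.mevalXU r i)).
rewrite /w big_split /= prod_const_seq (size_allseqs _ _ hjs) /cf exprVn.
by rewrite -/s; ring.
Qed.

End Spec.

End MyH.

Theorem lemmaB1 (R : realType) (d : measure_display) (Z : measurableType d)
  (K N : nat) (H : Type) (D : 'I_K -> probability Z R)
  (ell : H -> Z -> R) (A : N.-tuple Z -> H)
  (ell_meas : measurable_fun setT (fun p : N.-tuple Z * Z => ell (A p.1) p.2))
  (finite_exp : forall (k : 'I_K) (w : 'I_K -> R), simplex w ->
     (prodE (mixture (fun j => D j) w)
        (fun S => \int[D k]_z (`|ell (A S) z|)%:E) < +oo)%E) :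
  forall k : 'I_K,
    homogeneous0 (@nonneg_nonzero R K) (fk (fun j => D j) ell A k) /\
    rational_on (@nonneg_nonzero R K) (fk (fun j => D j) ell A k).
Proof.
move=> k; split.
  move=> r c [r0 _] c0; rewrite /fk; f_equal; apply/funext => j /=.
  by rewrite /rsum -mulr_sumr invfM mulrACA mulfV ?mul1r // gt_eqF.
have hD : forall j : 'I_K, MyH.pgood ((fun j => D j : {measure set Z -> \bar R}) j).
  by move=> j; exact: MyH.pgood_sf.
have mf : forall S : N.-tuple Z, measurable_fun setT (fun z => (ell (A S) z)%:E).
  move=> S; apply/measurable_EFinP.
  exact: (measurable_fun_pair2 (f := fun p : N.-tuple Z * Z => ell (A p.1) p.2)).
have mg : measurable_fun setT (fun S => (\int[D k]_z (ell (A S) z)%:E)%E).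
  apply: (@MyH.pgoodS _ _ _ _ (hD k) _ _ (fun p : N.-tuple Z * Z => (ell (A p.1) p.2)%:E)).
  exact/measurable_EFinP.
have mG : measurable_fun setT (fun S => (\int[D k]_z (`|ell (A S) z|%R)%:E)%E).
  apply: (@MyH.pgoodS _ _ _ _ (hD k) _ _ (fun p : N.-tuple Z * Z => (`|ell (A p.1) p.2|)%:E)).
  apply/measurable_EFinP.
  apply: (measurableT_comp _ ell_meas); exact: normr_measurable.
have G0 : forall S : N.-tuple Z, (0 <= \int[D k]_z (`|ell (A S) z|%R)%:E)%E.
  by move=> S; apply: integral_ge0 => z _; rewrite lee_fin.
have gG : forall S : N.-tuple Z,
    (`|\int[D k]_z (ell (A S) z)%:E| <= \int[D k]_z (`|ell (A S) z|%R)%:E)%E.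
  move=> S; apply: le_trans (le_abse_integral _ _ (mf S)) _ => //.
have hfin : forall w, simplex w ->
    (MyH.prodM N (fun _ => mixture (fun j => D j) w)
      (fun S => \int[D k]_z (`|ell (A S) z|%R)%:E) < +oo)%E.
  by move=> w hw; rewrite -MyH.prodE_M; exact: finite_exp.
have := @MyH.rat_main R d Z K (fun j => D j) hD N _ _ mg mG G0 gG hfin.
case=> P [Q [hQ hPQ]]; exists P, Q; split => // r hr.
by rewrite -hPQ // /fk /ebar MyH.prodE_M.
Qed.
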